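(* Consider a population of users $1,\dots,n$ with intervals $[l_i,r_i]$, speech points $p_i\in[l_i,r_i]$, common disutility $b:=b_1=\dots=b_n\ge0$ and common personalization parameter $\lambda:=\lambda_1=\dots=\lambda_n\in[0,1]$, in which compatibility is mutual: for all $i,j$, $p_j\in[l_i,r_i]$ implies $p_i\in[l_j,r_j]$. Then for any initial set of users on the platform and any starvation-free switching order, the platform reaches an equilibrium: there is a time $T$ after which the set of users on the platform never changes (and this set is stable).
   Context: For $\mathcal S\subseteq[n]$, user $i$'s utility is $u_i(\mathcal S)=\sum_{j\in\mathcal S\setminus\{i\}}\big(\mathbf 1[p_j\in[l_i,r_i]]-\lambda b\,\mathbf 1[p_j\notin[l_i,r_i]]\big)$. The platform (with no moderation) starts from some initial set of users; a switching order $\sigma:\mathbb Z_{>0}\to[n]$ is starvation-free if every user appears at infinitely many times. At time $t$, user $\sigma(t)$ is on the platform after step $t$ iff $u_{\sigma(t)}(\mathcal W)\ge0$, where $\mathcal W$ is the current set of users on the platform; all other users keep their status. A set $\mathcal S$ is stable if $u_i(\mathcal S)\ge0$ for all $i\in\mathcal S$ and $u_j(\mathcal S)<0$ for all $j\notin\mathcal S$. *)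

(* Defs.v *)
From HB Require Import structures.
From mathcomp Require Import all_boot all_order all_algebra.
Set Implicit Arguments. Unset Strict Implicit. Unset Printing Implicit Defensive.
Import Order.TTheory GRing.Theory Num.Theory.
Local Open Scope ring_scope.

Section Platform.
Variables (R : realFieldType) (n : nat).
Variables (l r p : 'I_n -> R) (lam b : R).

Definition compat (i j : 'I_n) : bool := (l i <= p j) && (p j <= r i).

Definition utility (i : 'I_n) (S : {set 'I_n}) : R :=
  \sum_(j in S :\ i) ((compat i j)%:R - lam * b * (~~ compat i j)%:R).

Definition step (k : 'I_n) (W : {set 'I_n}) : {set 'I_n} :=
  if 0 <= utility k W then k |: W else W :\ k.

(* Set of users on the platform after step t (times t = 1, 2, ...);
   traj 0 is the initial set; sigma 0 is never used. *)
Fixpoint traj (S0 : {set 'I_n}) (sigma : nat -> 'I_n) (t : nat) : {set 'I_n} :=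
  match t with
  | 0 => S0
  | t'.+1 => step (sigma t'.+1) (traj S0 sigma t')
  end.

Definition starvation_free (sigma : nat -> 'I_n) : Prop :=
  forall (i : 'I_n) (t : nat), exists t', (t < t')%N /\ sigma t' = i.

Definition stable (S : {set 'I_n}) : Prop :=
  (forall i, i \in S -> 0 <= utility i S) /\
  (forall j, j \notin S -> utility j S < 0).

End Platform.

(* Main.v *)
Require Import Defs.
From mathcomp Require Import all_boot all_order all_algebra.
From Stdlib Require Import Classical.
From mathcomp Require Import zify ring.
Import Order.TTheory GRing.Theory Num.Theory.
Local Open Scope ring_scope.

Section Pf.
Variables (R : realFieldType) (n : nat) (l r p : 'I_n -> R) (lam b : R).
Hypothesis hmut : forall i j, compat l r p i j -> compat l r p j i.

Definition w (i j : 'I_n) : R :=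
  (compat l r p i j)%:R - lam * b * (~~ compat l r p i j)%:R.

Lemma w_sym i j : w i j = w j i.
Proof.
rewrite /w; have -> : compat l r p i j = compat l r p j i.
  by apply/idP/idP => /hmut.
by [].
Qed.

Lemma utilE i S : utility l r p lam b i S = \sum_(j in S :\ i) w i j.
Proof. by []. Qed.

Definition Phi (W : {set 'I_n}) : R := \sum_(i in W) utility l r p lam b i W.

Lemma Phi_add (k : 'I_n) (W : {set 'I_n}) : k \notin W ->
  Phi (k |: W) = Phi W + 2%:R * utility l r p lam b k W.
Proof.
move=> kW; rewrite /Phi big_setU1 //= utilE setU1K //.
have E : forall i, i \in W -> utility l r p lam b i (k |: W) =
    w i k + utility l r p lam b i W.
  move=> i iW; rewrite !utilE.
  have ->: (k |: W) :\ i = k |: (W :\ i).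
    apply/setP => x; rewrite !inE.
    case: (eqVneq x k) => [->|] //=; rewrite andbT.
    by apply/eqP => ki; move: kW; rewrite ki iW.
  rewrite big_setU1 //= !inE negb_and kW orbT //.
rewrite (eq_bigr _ E).
have WkW : W :\ k = W.
  apply/setP => x; rewrite !inE; case: (eqVneq x k) => // ->.
  by rewrite (negbTE kW).
have -> : \sum_(i in W) (w i k + utility l r p lam b i W) =
   \sum_(i in W) w k i + \sum_(i in W) utility l r p lam b i W.
  by rewrite big_split /=; congr (_ + _); apply: eq_bigr => i _; rewrite w_sym.
rewrite [utility _ _ _ _ _ k W]utilE WkW.
rewrite mulr2n mulrDl mul1r.
set A := \sum_(i in W) w k i.
set B := \sum_(i in W) utility l r p lam b i W.
by rewrite addrA addrC.
Qed.

Definition lt_key (V W : {set 'I_n}) : bool :=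
  (Phi V < Phi W) || ((Phi V == Phi W) && (#|V| < #|W|)%N).

Lemma lt_key_trans U V W : lt_key U V -> lt_key V W -> lt_key U W.
Proof.
rewrite /lt_key => /orP[h1|/andP[/eqP e1 c1]] /orP[h2|/andP[/eqP e2 c2]].
- by rewrite (lt_trans h1 h2).
- by rewrite -e2 h1.
- by rewrite e1 h2.
- by rewrite e1 e2 eqxx (ltn_trans c1 c2) orbT.
Qed.

Lemma lt_key_irr V : ~~ lt_key V V.
Proof. by rewrite /lt_key ltxx ltnn andbF. Qed.

Definition rank (W : {set 'I_n}) : nat := #|[set X | lt_key X W]|.

Lemma rank_lt V W : lt_key V W -> (rank V < rank W)%N.
Proof.
move=> h; apply: proper_card; apply/properP; split.
  apply/subsetP => X; rewrite !inE => hX; exact: lt_key_trans hX h.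
by exists V; rewrite !inE // lt_key_irr.
Qed.

Lemma step_mono (k : 'I_n) (W : {set 'I_n}) :
  step l r p lam b k W = W \/ lt_key W (step l r p lam b k W).
Proof.
rewrite /step; case: ifP => hu.
  case: (boolP (k \in W)) => kW; first by left; apply/setP => x; rewrite !inE; case: eqP => // ->.
  right; rewrite /lt_key Phi_add //.
  have h2 : 0 <= 2%:R * utility l r p lam b k W by rewrite mulr_ge0.
  move: h2; rewrite le_eqVlt => /orP[/eqP <-|h2].
    by rewrite addr0 eqxx cardsU1 kW ltnSn orbT.
  by rewrite ltrDl h2.
case: (boolP (k \in W)) => kW; last by left; apply/setP => x; rewrite !inE; case: eqP => // ->; rewrite (negbTE kW).
right; rewrite /lt_key.
have e : W = k |: (W :\ k) by rewrite setD1K.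
have kW' : k \notin W :\ k by rewrite !inE eqxx.
have hu' : utility l r p lam b k (W :\ k) < 0.
  by rewrite /utility setDDl setUid -/(utility _ _ _ _ _ k W) ltNge hu.
by rewrite {1}e Phi_add // gtrDl pmulr_rlt0 // hu'.
Qed.

End Pf.

Theorem proposition13 (R : realFieldType) (n : nat) (l r p : 'I_n -> R) (lam b : R)
  (hb : 0 <= b) (hlam0 : 0 <= lam) (hlam1 : lam <= 1)
  (hp : forall i, l i <= p i <= r i)
  (hmut : forall i j, compat l r p i j -> compat l r p j i)
  (S0 : {set 'I_n}) (sigma : nat -> 'I_n)
  (hsf : starvation_free sigma) :
  exists (T : nat) (S : {set 'I_n}),
    (forall t, (T <= t)%N -> traj l r p lam b S0 sigma t = S) /\
    stable l r p lam b S.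
Proof.
set tr := traj l r p lam b S0 sigma.
set f := fun t => @rank R n l r p lam b (tr t).
have mono : forall t0 t, (t0 <= t)%N -> tr t = tr t0 \/ (f t0 < f t)%N.
  move=> t0; elim => [|t IH]; first by rewrite leqn0 => /eqP ->; left.
  rewrite leq_eqVlt => /orP[/eqP <-|]; first by left.
  have stE : tr t.+1 = step l r p lam b (sigma t.+1) (tr t) by [].
  rewrite stE ltnS => /IH [e|lt].
    have := @step_mono R n l r p lam b hmut (sigma t.+1) (tr t).
    move=> -[e'|lk]; first by left; rewrite e' e.
    by right; rewrite /f stE -e; apply: rank_lt.
  have := @step_mono R n l r p lam b hmut (sigma t.+1) (tr t).
  move=> -[e'|lk]; first by right; rewrite /f stE e'.
  right; apply: (ltn_trans lt); rewrite /f stE; exact: rank_lt.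
pose B := #|{set 'I_n}|.
have bnd : forall t, (f t <= B)%N by move=> t; exact: max_card.
have ev : forall k t0, (B - f t0 <= k)%N ->
    exists T, forall t, (T <= t)%N -> tr t = tr T.
  elim => [|k IH] t0 hk.
    exists t0 => t ht; have [//|lt] := mono t0 t ht.
    have := bnd t; lia.
  case: (classic (forall t, (t0 <= t)%N -> tr t = tr t0)) => [h|h].
    by exists t0.
  have [t ht] : exists t, ~ ((t0 <= t)%N -> tr t = tr t0).
    by apply: not_all_ex_not.
  have ht1 : (t0 <= t)%N by apply: NNPP => c; apply: ht => /c.
  have ht2 : tr t <> tr t0 by move=> e; apply: ht.
  have [//|lt] := mono t0 t ht1.
  apply: (IH t); have := bnd t; lia.
have [T hT] := ev B 0%N (leq_subr _ _).
exists T, (tr T); split; first exact: hT.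
have fix_i : forall i, step l r p lam b i (tr T) = tr T.
  move=> i; have [t' [lt e]] := hsf i T.
  case: t' lt e => [//|t'] lt e.
  have h1 := hT t'.+1 (ltnW lt).
  have h2 := hT t' lt.
  have : tr t'.+1 = step l r p lam b (sigma t'.+1) (tr t') by [].
  by rewrite h1 h2 e => <-.
split.
- move=> i iS; rewrite leNgt; apply/negP => hu.
  have := fix_i i; rewrite /step leNgt hu /= => e.
  by move: iS; rewrite -e !inE eqxx.
- move=> j jS; rewrite ltNge; apply/negP => hu.
  have := fix_i j; rewrite /step hu => e.
  by move: jS; rewrite -e !inE eqxx.
Qed.
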